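(* Let $\mathbb{K}$ be a field of characteristic $0$. Suppose $\mathcal{A}$ is a $2n$-dimensional Poincaré CDGA over $\mathbb{K}$ with trivial differential, and let $\omega\in\mathcal{A}^{2n}$ be the dual of the Poincaré class. Assume also that $\mathcal{A}^i=0$ for $i<0$. Let $\theta$ be a new element of degree $2n-1$ and $\mathcal{A}_\theta=\mathcal{A}\otimes\Lambda\theta$ with $d\theta=\omega$. If $\mathcal{A}_\theta$ is formal, then $\mathcal{A}^{2i+1}=0$ for all $i\in\mathbb{Z}$.
   Context: A finite-dimensional graded commutative algebra $H$ is $n$-dimensional Poincaré if there exists $\alpha_H\in(H^n)^\vee$ (the Poincaré class) such that $H^i\to(H^{n-i})^\vee$, $x\mapsto(y\mapsto\alpha_H(xy))$, is an isomorphism for all $i$; a CDGA is Poincaré if its cohomology is. The dual of the Poincaré class is the element of top degree $\omega$ paired to $\alpha_H$, i.e. with $\alpha_H(\omega)=1$ spanning the top degree. $\mathcal{A}_\theta=\{x+\theta y:x,y\in\mathcal{A}\}$ ($\theta^2=0$ since $\theta$ has odd degree). A CDGA is formal if it is connected to its cohomology by a zigzag of quasi-isomorphisms. *)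

(* Defs.v *)
From HB Require Import structures.
From mathcomp Require Import all_boot all_order all_algebra.
Set Implicit Arguments. Unset Strict Implicit. Unset Printing Implicit Defensive.
Import Order.TTheory GRing.Theory Num.Theory.
Local Open Scope ring_scope.

(* The carrier is a K-vector space with a bilinear, associative, unital
   multiplication (the zero algebra is allowed).  The grading is given by a
   family of linear projections [proj i] onto the homogeneous components
   A^i (i : int), pairwise orthogonal, and every element is the (finite)
   sum of its homogeneous components. *)
Record cdga (K : fieldType) := CDGA {
  carrier :> lmodType K;
  mul : carrier -> carrier -> carrier;
  one : carrier;
  proj : int -> carrier -> carrier;
  dif : carrier -> carrier;
  mul_linl : forall (a : K) (x y z : carrier), mul (a *: x + y) z = a *: mul x z + mul y z;
  mul_linr : forall (a : K) (x y z : carrier), mul z (a *: x + y) = a *: mul z x + mul z y;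
  mulA : forall x y z, mul x (mul y z) = mul (mul x y) z;
  mul1l : forall x, mul one x = x;
  mul1r : forall x, mul x one = x;
  proj_lin : forall i (a : K) (x y : carrier), proj i (a *: x + y) = a *: proj i x + proj i y;
  proj_proj : forall i j x, proj i (proj j x) = if i == j then proj j x else 0;
  proj_decomp : forall x, exists s : seq int, x = \sum_(i <- s) proj i x;
  proj_one : proj 0 one = one;
  proj_mul : forall i j x y, proj (i + j) (mul (proj i x) (proj j y)) = mul (proj i x) (proj j y);
  gcomm : forall i j x y,
    mul (proj i x) (proj j y) = ((-1 : K) ^ (i * j)) *: mul (proj j y) (proj i x);
  dif_lin : forall (a : K) (x y : carrier), dif (a *: x + y) = a *: dif x + dif y;
  dif_deg : forall i x, proj (i + 1) (dif (proj i x)) = dif (proj i x);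
  dif_dif : forall x, dif (dif x) = 0;
  leibniz : forall i x y,
    dif (mul (proj i x) y) = mul (dif (proj i x)) y + ((-1 : K) ^ i) *: mul (proj i x) (dif y)
}.

Arguments mul {K} c _ _.
Arguments one {K} c.
Arguments proj {K} c _ _.
Arguments dif {K} c _.

Section Defs.
Variable K : fieldType.

Definition homog (A : cdga K) (i : int) (x : A) : Prop := proj A i x = x.

Definition cdga_morph (A B : cdga K) (f : A -> B) : Prop :=
  [/\ forall (a : K) (x y : A), f (a *: x + y) = a *: f x + f y,
      forall x y, f (mul A x y) = mul B (f x) (f y),
      f (one A) = one B,
      forall i x, f (proj A i x) = proj B i (f x)
    & forall x, f (dif A x) = dif B (f x)].

(* The map induced by f on cohomology H^i is bijective, for every i
   (written out on representatives: cocycles modulo coboundaries). *)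
Definition quasi_iso (A B : cdga K) (f : A -> B) : Prop :=
  cdga_morph f /\
  forall i : int,
    (* injectivity of H^i(f) *)
    (forall x : A, homog i x -> dif A x = 0 ->
       (exists w : B, f x = dif B w) -> exists z : A, x = dif A z) /\
    (* surjectivity of H^i(f) *)
    (forall y : B, homog i y -> dif B y = 0 ->
       exists x : A, [/\ homog i x, dif A x = 0 & exists z : B, y - f x = dif B z]).

Inductive zigzag : cdga K -> cdga K -> Prop :=
  | zz_refl (A : cdga K) : zigzag A A
  | zz_fwd (A B C : cdga K) (f : B -> C) : zigzag A B -> quasi_iso f -> zigzag A C
  | zz_bwd (A B C : cdga K) (f : C -> B) : zigzag A B -> quasi_iso f -> zigzag A C.

(* Formality: A is connected by a zigzag of quasi-isomorphisms to a CDGA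
   with zero differential (necessarily isomorphic to the cohomology H(A)). *)
Definition formal (A : cdga K) : Prop :=
  exists H : cdga K, (forall x : H, dif H x = 0) /\ zigzag A H.

Definition findim (A : cdga K) : Prop :=
  exists s : seq A, forall x : A, exists c : nat -> K,
    x = \sum_(k < size s) c k *: s`_k.

(* A graded commutative algebra H (= a CDGA with trivial differential, which
   is its own cohomology) is m-dimensional Poincare with Poincare class
   alpha in (H^m)^v (a linear form on H, used on H^m): H is finite
   dimensional and for each i the map H^i -> (H^(m-i))^v,
   x |-> (y |-> alpha (x y)) is an isomorphism. *)
Definition poincare_class (A : cdga K) (m : int) (alpha : A -> K) : Prop :=
  [/\ findim A,
      forall (a : K) (x y : A), alpha (a *: x + y) = a * alpha x + alpha y
    & forall i : int,
      (forall x : A, homog i x ->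
         (forall y : A, homog (m - i) y -> alpha (mul A x y) = 0) -> x = 0) /\
      (* surjective onto the dual of H^(m-i) *)
      (forall phi : A -> K,
         (forall (a : K) (y z : A), phi (a *: y + z) = a * phi y + phi z) ->
         exists x : A, homog i x /\
           forall y : A, homog (m - i) y -> phi y = alpha (mul A x y))].

(* B is the CDGA A_theta = A (x) Lambda(theta), |theta| = m - 1,
   d theta = omega : there is a CDGA morphism iota : A -> B and an element
   theta of B of degree m - 1 with d theta = iota omega, such that every
   element of B is uniquely of the form iota x + theta * iota y. *)
Definition is_A_theta (A B : cdga K) (m : int) (omega : A)
    (iota : A -> B) (theta : B) : Prop :=
  [/\ cdga_morph iota,
      homog (m - 1) theta,
      dif B theta = iota omega
    & forall b : B, exists! xy : A * A,
        b = iota xy.1 + mul B theta (iota xy.2)].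

End Defs.

Arguments poincare_class {K} A m alpha.
Arguments is_A_theta {K} A B m omega iota theta.
Arguments findim {K} A.

(* Main.v *)
From Pilot Require Import Defs.
From HB Require Import structures.
From mathcomp Require Import all_boot all_order all_algebra zify.
From Stdlib Require Import Classical.
Set Implicit Arguments. Unset Strict Implicit. Unset Printing Implicit Defensive.
Import Order.TTheory GRing.Theory Num.Theory.
Import Pilot.Defs.
Local Open Scope ring_scope.

Lemma additive0 (V W : zmodType) (g : V -> W) :
  (forall a b, g (a + b) = g a + g b) -> g 0 = 0.
Proof. by move=> gD; apply/eqP; rewrite -(addrI (g 0) (_ : g 0 + g 0 = g 0 + 0)) // -gD !addr0. Qed.

Lemma additiveN (V W : zmodType) (g : V -> W) :
  (forall a b, g (a + b) = g a + g b) -> forall a, g (- a) = - g a.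
Proof.
move=> gD a; apply/eqP; rewrite -addr_eq0 -gD addNr.
by rewrite (additive0 gD).
Qed.

Lemma additive_sum (V W : zmodType) (g : V -> W) (S : seq int) (F : int -> V) :
  (forall a b, g (a + b) = g a + g b) ->
  g (\sum_(s <- S) F s) = \sum_(s <- S) g (F s).
Proof.
move=> gD; elim: S => [|s S IH]; first by rewrite !big_nil (additive0 gD).
by rewrite !big_cons gD IH.
Qed.


Lemma cmulDl (K : fieldType) (C : cdga K) (x y z : C) :
  mul C (x + y) z = mul C x z + mul C y z.
Proof. by rewrite -{1}(scale1r x) mul_linl scale1r. Qed.
Lemma cmulDr (K : fieldType) (C : cdga K) (x y z : C) :
  mul C z (x + y) = mul C z x + mul C z y.
Proof. by rewrite -{1}(scale1r x) mul_linr scale1r. Qed.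
Lemma cmul0l (K : fieldType) (C : cdga K) (z : C) : mul C 0 z = 0.
Proof. exact: (additive0 (fun x y => @cmulDl K C x y z)). Qed.
Lemma cmul0r (K : fieldType) (C : cdga K) (z : C) : mul C z 0 = 0.
Proof. exact: (additive0 (fun x y => @cmulDr K C x y z)). Qed.
Lemma cmulNl (K : fieldType) (C : cdga K) (x z : C) : mul C (- x) z = - mul C x z.
Proof. exact: (additiveN (fun x y => @cmulDl K C x y z)). Qed.
Lemma cmulNr (K : fieldType) (C : cdga K) (x z : C) : mul C z (- x) = - mul C z x.
Proof. exact: (additiveN (fun x y => @cmulDr K C x y z)). Qed.
Lemma cmulZl (K : fieldType) (C : cdga K) (a : K) (x z : C) : mul C (a *: x) z = a *: mul C x z.
Proof. by rewrite -[a *: x]addr0 mul_linl cmul0l addr0. Qed.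
Lemma cmulZr (K : fieldType) (C : cdga K) (a : K) (x z : C) : mul C z (a *: x) = a *: mul C z x.
Proof. by rewrite -[a *: x]addr0 mul_linr cmul0r addr0. Qed.
Lemma cmulBl (K : fieldType) (C : cdga K) (x y z : C) :
  mul C (x - y) z = mul C x z - mul C y z.
Proof. by rewrite cmulDl cmulNl. Qed.
Lemma cmulBr (K : fieldType) (C : cdga K) (x y z : C) :
  mul C z (x - y) = mul C z x - mul C z y.
Proof. by rewrite cmulDr cmulNr. Qed.

Lemma difD (K : fieldType) (C : cdga K) (x y : C) : dif C (x + y) = dif C x + dif C y.
Proof. by rewrite -{1}(scale1r x) dif_lin scale1r. Qed.
Lemma dif0 (K : fieldType) (C : cdga K) : dif C 0 = 0.
Proof. exact: (additive0 (@difD K C)). Qed.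
Lemma difN (K : fieldType) (C : cdga K) (x : C) : dif C (- x) = - dif C x.
Proof. exact: (additiveN (@difD K C)). Qed.
Lemma difB (K : fieldType) (C : cdga K) (x y : C) : dif C (x - y) = dif C x - dif C y.
Proof. by rewrite difD difN. Qed.
Lemma difZ (K : fieldType) (C : cdga K) (a : K) (x : C) : dif C (a *: x) = a *: dif C x.
Proof. by rewrite -[a *: x]addr0 dif_lin dif0 addr0. Qed.

Lemma projD (K : fieldType) (C : cdga K) i (x y : C) : proj C i (x + y) = proj C i x + proj C i y.
Proof. by rewrite -{1}(scale1r x) proj_lin scale1r. Qed.
Lemma proj0 (K : fieldType) (C : cdga K) i : proj C i 0 = 0.
Proof. exact: (additive0 (@projD K C i)). Qed.
Lemma projN (K : fieldType) (C : cdga K) i (x : C) : proj C i (- x) = - proj C i x.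
Proof. exact: (additiveN (@projD K C i)). Qed.
Lemma projB (K : fieldType) (C : cdga K) i (x y : C) : proj C i (x - y) = proj C i x - proj C i y.
Proof. by rewrite projD projN. Qed.
Lemma projZ (K : fieldType) (C : cdga K) i (a : K) (x : C) : proj C i (a *: x) = a *: proj C i x.
Proof. by rewrite -[a *: x]addr0 proj_lin proj0 addr0. Qed.
Lemma proj_id (K : fieldType) (C : cdga K) i (x : C) : proj C i (proj C i x) = proj C i x.
Proof. by rewrite proj_proj eqxx. Qed.
Lemma homog_proj (K : fieldType) (C : cdga K) i (x : C) : homog i (proj C i x).
Proof. exact: proj_id. Qed.

Lemma proj_count (K : fieldType) (charK0 : [pchar K] =i pred0) (C : cdga K)
   (x : C) (S : seq int) : x = \sum_(s <- S) proj C s x ->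
   forall t, proj C t x = 0 \/ count_mem t S = 1%N.
Proof.
move=> ex t.
have : proj C t x = proj C t x *+ count_mem t S.
  rewrite {1}ex (additive_sum _ _ (@projD K C t)).
  elim: S {ex} => [|s S IH]; first by rewrite big_nil.
  rewrite big_cons /= proj_proj IH; case: (eqVneq t s) => [<-|ne].
    by rewrite mulrS.
  by rewrite add0r.
case: (count_mem t S) => [|[|m]]; first by move=> ->; left.
  by right.
move=> /eqP; rewrite mulrS -{1}(addr0 (proj C t x)) eq_sym => /eqP /addrI.
rewrite -scaler_nat => /eqP; rewrite scaler_eq0 => /orP [|/eqP]; last by left.
by move/pcharf0P: charK0 => ->.
Qed.

Lemma graded_map (K : fieldType) (charK0 : [pchar K] =i pred0) (C D : cdga K)
  (g : C -> D) (d : int) :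
  (forall a b, g (a + b) = g a + g b) ->
  (forall s x, proj D (s + d) (g (proj C s x)) = g (proj C s x)) ->
  forall t x, proj D (t + d) (g x) = g (proj C t x).
Proof.
move=> gD gh t x; have [S ex] := proj_decomp x.
have := proj_count charK0 ex t.
have -> : proj D (t + d) (g x) = g (proj C t x) *+ count_mem t S.
  rewrite {1}ex (additive_sum _ _ gD) (additive_sum _ _ (@projD K D (t + d))).
  elim: S {ex} => [|s S IH]; first by rewrite big_nil.
  rewrite big_cons /= -gh proj_proj IH gh; case: (eqVneq t s) => [<-|ne].
    by rewrite !eqxx mulrS.
  case: eqP => [/addIr E|_]; first by rewrite E eqxx in ne.
  by rewrite add0r.
by case => [->|->]; rewrite ?(additive0 gD) ?mul0rn.
Qed.

Lemma proj_dif (K : fieldType) (charK0 : [pchar K] =i pred0) (C : cdga K) t (x : C) :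
  proj C (t + 1) (dif C x) = dif C (proj C t x).
Proof. by apply: (graded_map charK0 (@difD K C)) => s y; apply: dif_deg. Qed.

Lemma proj_difB (K : fieldType) (charK0 : [pchar K] =i pred0) (C : cdga K) t (x : C) :
  proj C t (dif C x) = dif C (proj C (t - 1) x).
Proof. by rewrite -proj_dif // subrK. Qed.

Lemma proj_mulL (K : fieldType) (charK0 : [pchar K] =i pred0) (C : cdga K) i t (x y : C) :
  proj C (t + i) (mul C (proj C i x) y) = mul C (proj C i x) (proj C t y).
Proof.
apply: (graded_map charK0 (fun a b => @cmulDr K C a b _)) => s z.
by rewrite addrC proj_mul.
Qed.

Lemma proj_mulR (K : fieldType) (charK0 : [pchar K] =i pred0) (C : cdga K) j t (y z : C) :
  proj C (t + j) (mul C y (proj C j z)) = mul C (proj C t y) (proj C j z).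
Proof.
apply: (graded_map charK0 (fun a b => @cmulDl K C a b _)) => s w.
by rewrite proj_mul.
Qed.

Lemma homogM (K : fieldType) (C : cdga K) i j (x y : C) :
  homog i x -> homog j y -> homog (i + j) (mul C x y).
Proof. by rewrite /homog => hx hy; rewrite -hx -hy proj_mul. Qed.
Lemma homogD (K : fieldType) (C : cdga K) i (x y : C) :
  homog i x -> homog i y -> homog i (x + y).
Proof. by rewrite /homog => hx hy; rewrite projD hx hy. Qed.
Lemma homogN (K : fieldType) (C : cdga K) i (x : C) : homog i x -> homog i (- x).
Proof. by rewrite /homog => hx; rewrite projN hx. Qed.
Lemma homogB (K : fieldType) (C : cdga K) i (x y : C) :
  homog i x -> homog i y -> homog i (x - y).
Proof. by move=> hx hy; apply: homogD => //; apply: homogN. Qed.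
Lemma homogZ (K : fieldType) (C : cdga K) i a (x : C) : homog i x -> homog i (a *: x).
Proof. by rewrite /homog => hx; rewrite projZ hx. Qed.
Lemma homog0 (K : fieldType) (C : cdga K) i : homog i (0 : C).
Proof. exact: proj0. Qed.
Lemma homog_dif (K : fieldType) (C : cdga K) i (x : C) : homog i x -> homog (i + 1) (dif C x).
Proof. by rewrite /homog => hx; rewrite -hx dif_deg. Qed.
Lemma homog_eq (K : fieldType) (C : cdga K) i j (x : C) : i = j -> homog i x -> homog j x.
Proof. by move=> ->. Qed.

Lemma leib (K : fieldType) (C : cdga K) i (x y : C) : homog i x ->
  dif C (mul C x y) = mul C (dif C x) y + (-1) ^ i *: mul C x (dif C y).
Proof. by rewrite /homog => hx; rewrite -hx leibniz. Qed.

Lemma gcommh (K : fieldType) (C : cdga K) i j (x y : C) : homog i x -> homog j y ->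
  mul C x y = (-1) ^ (i * j) *: mul C y x.
Proof. by rewrite /homog => hx hy; rewrite -hx -hy gcomm. Qed.

Lemma sgn1 (K : fieldType) : (-1 : K) ^ (1 : int) = - 1.
Proof. by rewrite /exprz /= expr1. Qed.
Lemma sgn2z (K : fieldType) : (-1 : K) ^ (2 : int) = 1.
Proof. by rewrite /exprz /= expr2 mulrNN mulr1. Qed.
Lemma sgnS (K : fieldType) (i : int) : (-1 : K) ^ (i + 1) = - (-1) ^ i.
Proof. by rewrite exprzDr ?unitrN1 // sgn1 mulrN1. Qed.
Lemma sgnD (K : fieldType) (i j : int) : (-1 : K) ^ (i + j) = (-1) ^ i * (-1) ^ j.
Proof. by rewrite exprzDr ?unitrN1. Qed.
Lemma sgn2 (K : fieldType) (i : int) : (-1 : K) ^ i * (-1) ^ i = 1.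
Proof. by rewrite -sgnD (_ : i + i = 2 * i); [rewrite -exprz_exp sgn2z exp1rz | lia]. Qed.
Lemma sgnB1 (K : fieldType) (i : int) : (-1 : K) ^ (i - 1) = - (-1) ^ i.
Proof. by rewrite -{2}(subrK 1 i) sgnS opprK. Qed.
Lemma sgn_odd (K : fieldType) (m : int) : (-1 : K) ^ (2 * m + 1) = - 1.
Proof. by rewrite sgnS -exprz_exp sgn2z exp1rz. Qed.

Lemma morph_lemmas (K : fieldType) (A B : cdga K) (f : A -> B) : cdga_morph f ->
  [/\ forall x y, f (x + y) = f x + f y, f 0 = 0, forall x, f (- x) = - f x,
      forall a x, f (a *: x) = a *: f x &
      forall i x, homog i x -> homog i (f x)].
Proof.
case=> fl fm f1 fp fd.
have fD : forall x y, f (x + y) = f x + f y by move=> x y; rewrite -{1}(scale1r x) fl scale1r.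
split => //; first exact: additive0 fD; first exact: additiveN fD.
  by move=> a x; rewrite -[a *: x]addr0 fl (additive0 fD) addr0.
by move=> i x; rewrite /homog => hx; rewrite -fp hx.
Qed.

Definition Qt (K : fieldType) (C : cdga K) (i j k : int) (x y z : C) : Prop :=
  forall u v, homog (i + j - 1) u -> homog (j + k - 1) v ->
   mul C x y = dif C u -> mul C y z = dif C v ->
   exists u' v' w, [/\ homog (i + j - 1) u', homog (j + k - 1) v',
     mul C x y = dif C u', mul C y z = dif C v' &
     mul C u' z + (-1) ^ (i + 1) *: mul C x v' = dif C w].

Definition MP (K : fieldType) (C : cdga K) : Prop :=
  forall i j k (x y z : C), homog i x -> homog j y -> homog k z ->
    dif C x = 0 -> dif C y = 0 -> dif C z = 0 -> Qt i j k x y z.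

Lemma MP_zero (K : fieldType) (C : cdga K) : (forall x : C, dif C x = 0) -> MP C.
Proof.
move=> d0 i j k x y z _ _ _ _ _ _ u v _ _ e1 e2.
exists 0, 0, 0; split; rewrite ?d0 ?e1 ?e2 //; try exact: homog0.
by rewrite cmul0l cmul0r scaler0 addr0.
Qed.

Lemma chX (K : fieldType) (C : cdga K) i j k (x y z a : C) :
  homog i x -> homog j y -> homog k z -> dif C y = 0 -> dif C z = 0 ->
  homog (i - 1) a -> Qt i j k x y z -> Qt i j k (x + dif C a) y z.
Proof.
move=> hx hy hz dy dz ha Q u v hu hv e1 e2.
have dy' : dif C (mul C a y) = mul C (dif C a) y.
  by rewrite (leib _ ha) dy cmul0r scaler0 addr0.
have hay : homog (i + j - 1) (mul C a y).
  by apply: homog_eq (homogM ha hy); lia.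
have e1u : mul C x y = dif C (u - mul C a y) by rewrite difB dy' -e1 cmulDl addrK.
have [u' [v' [w [hu' hv' e1' e2' ew]]]] := Q (u - mul C a y) v (homogB hu hay) hv e1u e2.
exists (u' + mul C a y), v', (w + (-1) ^ (i + 1) *: mul C a v'); split => //.
- exact: homogD.
- by rewrite cmulDl difD -e1' dy'.
rewrite difD -ew difZ (leib _ ha) -e2' scalerDr scalerA -sgnD.
rewrite (_ : i + 1 + (i - 1) = 2 * i); last by lia.
rewrite -exprz_exp sgn2z exp1rz scale1r cmulDl cmulDl scalerDr -mulA.
by rewrite addrACA (addrC (mul C a _)).
Qed.

Lemma chY (K : fieldType) (C : cdga K) i j k (x y z b : C) :
  homog i x -> homog j y -> homog k z -> dif C x = 0 -> dif C z = 0 ->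
  homog (j - 1) b -> Qt i j k x y z -> Qt i j k x (y + dif C b) z.
Proof.
move=> hx hy hz dx dz hb Q u v hu hv e1 e2.
have xdb : mul C x (dif C b) = (-1) ^ i *: dif C (mul C x b).
  by rewrite (leib _ hx) dx cmul0l add0r scalerA sgn2 scale1r.
have dbz : dif C (mul C b z) = mul C (dif C b) z.
  by rewrite (leib _ hb) dz cmul0r scaler0 addr0.
have hxb : homog (i + j - 1) (mul C x b).
  by apply: homog_eq (homogM hx hb); lia.
have hbz : homog (j + k - 1) (mul C b z).
  by apply: homog_eq (homogM hb hz); lia.
have e1u : mul C x y = dif C (u - (-1) ^ i *: mul C x b).
  by rewrite difB difZ -xdb -e1 cmulDr addrK.
have e2u : mul C y z = dif C (v - mul C b z).
  by rewrite difB dbz -e2 cmulDl addrK.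
have [u' [v' [w [hu' hv' e1' e2' ew]]]] :=
  Q _ _ (homogB hu (homogZ _ hxb)) (homogB hv hbz) e1u e2u.
exists (u' + (-1) ^ i *: mul C x b), (v' + mul C b z), w; split.
- exact: homogD (homogZ _ hxb).
- exact: homogD.
- by rewrite cmulDr difD difZ -xdb -e1'.
- by rewrite cmulDl difD dbz -e2'.
rewrite -ew cmulDl cmulDr scalerDr cmulZl -mulA sgnS scaleNr.
by rewrite !scaleNr addrACA subrr addr0.
Qed.

Lemma chZ (K : fieldType) (C : cdga K) i j k (x y z c : C) :
  homog i x -> homog j y -> homog k z -> dif C x = 0 -> dif C y = 0 ->
  homog (k - 1) c -> Qt i j k x y z -> Qt i j k x y (z + dif C c).
Proof.
move=> hx hy hz dx dy hc Q u v hu hv e1 e2.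
have ydc : mul C y (dif C c) = (-1) ^ j *: dif C (mul C y c).
  by rewrite (leib _ hy) dy cmul0l add0r scalerA sgn2 scale1r.
have hyc : homog (j + k - 1) (mul C y c).
  by apply: homog_eq (homogM hy hc); lia.
have e2u : mul C y z = dif C (v - (-1) ^ j *: mul C y c).
  by rewrite difB difZ -ydc -e2 cmulDr addrK.
have [u' [v' [w [hu' hv' e1' e2' ew]]]] :=
  Q _ _ hu (homogB hv (homogZ _ hyc)) e1 e2u.
set t := (-1 : K) ^ (i + j - 1).
have du'c : mul C u' (dif C c) = t *: (dif C (mul C u' c) - mul C (mul C x y) c).
  rewrite (leib _ hu') -e1' addrC addKr scalerA sgn2 scale1r //.
have st : (-1) ^ (i + 1) * (-1) ^ j = t.
  by rewrite -sgnD /t (_ : i + 1 + j = i + j - 1 + 1 + 1) ?sgnS ?opprK //; lia.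
exists u', (v' + (-1) ^ j *: mul C y c), (w + t *: mul C u' c); split => //.
- exact: homogD (homogZ _ hyc).
- by rewrite cmulDr difD difZ -ydc -e2'.
rewrite difD -ew difZ cmulDr du'c cmulDr scalerDr !cmulZr.
rewrite scalerDr scalerA st mulA scalerN -!addrA; congr (_ + _).
by rewrite (addrC (_ *: mul C x v')) addKr addrC.
Qed.

Lemma exact_proj (K : fieldType) (charK0 : [pchar K] =i pred0) (C : cdga K) t (x z : C) :
  homog t x -> x = dif C z -> x = dif C (proj C (t - 1) z).
Proof. by move=> hx ez; rewrite -proj_difB // -ez hx. Qed.

Lemma cocycleM (K : fieldType) (C : cdga K) i (x y : C) :
  homog i x -> dif C x = 0 -> dif C y = 0 -> dif C (mul C x y) = 0.
Proof. by move=> hx dx dy; rewrite (leib _ hx) dx dy cmul0l cmul0r scaler0 addr0. Qed.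

Lemma transport (K : fieldType) (charK0 : [pchar K] =i pred0) (A B : cdga K) (f : A -> B)
  i j k (x y z : A) : quasi_iso f ->
  homog i x -> homog j y -> homog k z -> dif A x = 0 -> dif A y = 0 -> dif A z = 0 ->
  Qt i j k x y z -> Qt i j k (f x) (f y) (f z).
Proof.
move=> [fm fq] hx hy hz dx dy dz Q U V hU hV e1 e2.
have [fD f0 fN fZ fh] := morph_lemmas fm.
case: fm => _ fM _ fp fd.
have [u0 eu0] : exists u0, mul A x y = dif A u0.
  apply: (proj1 (fq (i + j))) (homogM hx hy) (cocycleM hx dx dy) _.
  by exists U; rewrite fM.
have [v0 ev0] : exists v0, mul A y z = dif A v0.
  apply: (proj1 (fq (j + k))) (homogM hy hz) (cocycleM hy dy dz) _.
  by exists V; rewrite fM.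
have [u' [v' [w [hu' hv' e1' e2' ew]]]] := Q _ _ (homog_proj _ _) (homog_proj _ _)
  (exact_proj charK0 (homogM hx hy) eu0) (exact_proj charK0 (homogM hy hz) ev0).
exists (f u'), (f v'), (f w); split; try exact: fh.
- by rewrite -fM e1' fd.
- by rewrite -fM e2' fd.
by rewrite -!fM -fZ -fD ew fd.
Qed.

Lemma rep (K : fieldType) (charK0 : [pchar K] =i pred0) (A B : cdga K) (f : A -> B) :
  quasi_iso f -> forall l (W : B), homog l W -> dif B W = 0 -> exists x a,
   [/\ homog l x, dif A x = 0, homog (l - 1) a & W = f x + dif B a].
Proof.
move=> [fm fqq] l W hW dW.
have [fD f0 fN fZ fh] := morph_lemmas fm.
have [x [hx dx [z0 ez0]]] := proj2 (fqq l) W hW dW.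
exists x, (proj B (l - 1) z0); split => //; first exact: homog_proj.
by rewrite -(exact_proj charK0 (homogB hW (fh _ _ hx)) ez0) addrC subrK.
Qed.

Lemma push (K : fieldType) (charK0 : [pchar K] =i pred0) (A B : cdga K) (f : A -> B) :
  quasi_iso f -> MP A -> MP B.
Proof.
move=> fq MA i j k X Y Z hX hY hZ dX dY dZ.
have [fm fqq] := fq.
have [fD f0 fN fZ fh] := morph_lemmas fm.
have fd : forall x, f (dif A x) = dif B (f x) by case: fm.
have [x [a [hx dx ha ->]]] := rep charK0 fq hX dX.
have [y [b [hy dy hb ->]]] := rep charK0 fq hY dY.
have [z [c [hz dz hc ->]]] := rep charK0 fq hZ dZ.
have Q := transport charK0 fq hx hy hz dx dy dz (MA _ _ _ _ _ _ hx hy hz dx dy dz).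
have hda : forall l (a : B), homog (l - 1) a -> homog l (dif B a).
  by move=> l e he; apply: homog_eq (homog_dif he); lia.
have dd : forall (x : A) (a : B), dif A x = 0 -> dif B (f x + dif B a) = 0.
  by move=> e g de; rewrite difD -fd de f0 dif_dif addr0.
apply: chZ => //; first exact: homogD (fh _ _ hx) (hda _ _ ha);
  first exact: homogD (fh _ _ hy) (hda _ _ hb); try exact: fh; try exact: dd.
apply: chY => //; first exact: homogD (fh _ _ hx) (hda _ _ ha); try exact: fh;
  try exact: dd; try by rewrite -fd ?dz ?dy f0.
apply: chX => //; try exact: fh; try by rewrite -fd ?dz ?dy f0.
Qed.

Lemma pull (K : fieldType) (charK0 : [pchar K] =i pred0) (A B : cdga K) (f : A -> B) :
  quasi_iso f -> MP B -> MP A.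
Proof.
move=> fq MB i j k x y z hx hy hz dx dy dz u v hu hv e1 e2.
have [fm fqq] := fq.
have [fD f0 fN fZ fh] := morph_lemmas fm.
case: fm => _ fM _ fp fd.
have fx0 : dif B (f x) = 0 by rewrite -fd dx f0.
have fy0 : dif B (f y) = 0 by rewrite -fd dy f0.
have fz0 : dif B (f z) = 0 by rewrite -fd dz f0.
have E1 : mul B (f x) (f y) = dif B (f u) by rewrite -fM e1 fd.
have E2 : mul B (f y) (f z) = dif B (f v) by rewrite -fM e2 fd.
have [U' [V' [W [hU hV e1' e2' eW]]]] :=
  MB i j k _ _ _ (fh _ _ hx) (fh _ _ hy) (fh _ _ hz) fx0 fy0 fz0 _ _ (fh _ _ hu) (fh _ _ hv) E1 E2.
have dG1 : dif B (U' - f u) = 0 by rewrite difB -e1' E1 subrr.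
have dG2 : dif B (V' - f v) = 0 by rewrite difB -e2' E2 subrr.
have [c1 [a1 [hc1 dc1 ha1 ea1]]] := rep charK0 fq (homogB hU (fh _ _ hu)) dG1.
have [c2 [a2 [hc2 dc2 ha2 ea2]]] := rep charK0 fq (homogB hV (fh _ _ hv)) dG2.
set s := (-1 : K) ^ (i + 1).
set Q := mul A (u + c1) z + s *: mul A x (v + c2).
have hQ : homog (i + j + k - 1) Q.
  apply: homogD.
    by apply: homog_eq (homogM (homogD hu hc1) hz); lia.
  by apply: homogZ; apply: homog_eq (homogM hx (homogD hv hc2)); lia.
have dQ : dif A Q = 0.
  rewrite /Q difD difZ (leib _ (homogD hu hc1)) (leib _ hx) dz dx difD dc1 addr0 -e1.
  rewrite difD dc2 addr0 -e2 cmul0r cmul0l scaler0 addr0 add0r scalerA /s sgnS.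
  by rewrite mulNr sgn2 scaleN1r mulA subrr.
have fQ : exists w', f Q = dif B w'.
  exists (W - mul B a1 (f z) - (s * (-1) ^ i) *: mul B (f x) a2).
  rewrite /Q fD fZ !fM !fD.
  have -> : f u + f c1 = U' - dif B a1 by rewrite -[U'](subrK (f u)) ea1 addrAC addrK addrC.
  have -> : f v + f c2 = V' - dif B a2 by rewrite -[V'](subrK (f v)) ea2 addrAC addrK addrC.
  rewrite !difB difZ -eW (leib _ ha1) fz0 cmul0r scaler0 addr0 (leib _ (fh _ _ hx)) fx0.
  rewrite cmul0l add0r cmulBl cmulBr scalerBr scalerA -mulrA sgn2 mulr1.
  by rewrite addrACA addrA.
have [w ew] := proj1 (fqq (i + j + k - 1)) Q hQ dQ fQ.
exists (u + c1), (v + c2), w; split => //.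
- exact: homogD.
- exact: homogD.
- by rewrite difD dc1 addr0.
- by rewrite difD dc2 addr0.
Qed.

Lemma zigzag_MP (K : fieldType) (charK0 : [pchar K] =i pred0) (A C : cdga K) :
  zigzag A C -> MP C -> MP A.
Proof.
elim=> [//|A' B' C' f _ IH fq|A' B' C' f _ IH fq] MC; apply: IH.
  exact: (@pull K charK0 _ _ f fq MC).
exact: (@push K charK0 _ _ f fq MC).
Qed.


Definition Rep (K : fieldType) (A B : cdga K) (iota : A -> B) (theta : B) (b : B) (p q : A) :=
  b = iota p + mul B theta (iota q).

Lemma Rep_lemmas (K : fieldType) (A B : cdga K) (iota : A -> B) (theta : B) :
  cdga_morph iota ->
  [/\ forall b1 b2 p1 p2 q1 q2, Rep iota theta b1 p1 q1 -> Rep iota theta b2 p2 q2 ->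
        Rep iota theta (b1 + b2) (p1 + p2) (q1 + q2),
      forall c b p q, Rep iota theta b p q -> Rep iota theta (c *: b) (c *: p) (c *: q),
      forall p, Rep iota theta (iota p) p 0,
      forall q, Rep iota theta (mul B theta (iota q)) 0 q &
      forall b p q r, Rep iota theta b p q ->
        Rep iota theta (mul B b (iota r)) (mul A p r) (mul A q r)].
Proof.
move=> fm; have [fD f0 fN fZ fh] := morph_lemmas fm.
case: fm => _ fM _ _ _; rewrite /Rep; split.
- by move=> b1 b2 p1 p2 q1 q2 -> ->; rewrite !fD cmulDr addrACA.
- by move=> c b p q ->; rewrite scalerDr !fZ cmulZr.
- by move=> p; rewrite f0 cmul0r addr0.
- by move=> q; rewrite f0 add0r.
- by move=> b p q r ->; rewrite cmulDl !fM -mulA.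
Qed.

Lemma sgn_even (K : fieldType) (m : int) : (-1 : K) ^ (2 * m) = 1.
Proof. by rewrite -exprz_exp sgn2z exp1rz. Qed.

Unset Implicit Arguments.

Theorem lemma3p6 (K : fieldType) (charK0 : [pchar K] =i pred0) (n : nat)
  (A : cdga K)
  (trivial_dif : forall x : A, dif A x = 0)
  (nonneg : forall (i : int) (x : A), i < 0 -> proj A i x = 0)
  (alpha : A -> K) (Hpoinc : poincare_class A (2 * n)%:Z alpha)
  (omega : A) (Homega_deg : homog (2 * n)%:Z omega) (Homega : alpha omega = 1)
  (Homega_span : forall x : A, homog (2 * n)%:Z x -> exists c : K, x = c *: omega)
  (B : cdga K) (iota : A -> B) (theta : B)
  (HB : is_A_theta A B (2 * n)%:Z omega iota theta)
  (Hformal : formal B) :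
  forall (i : int) (x : A), proj A (2 * i + 1) x = 0.
Proof.
move=> i x0.
set p := 2 * i + 1; set a := proj A p x0.
have ha : homog p a by exact: homog_proj.
case: (eqVneq a 0) => // anz; exfalso.
have [H [H0 Hz]] := Hformal.
have MB := zigzag_MP charK0 Hz (MP_zero H0).
case: Hpoinc => _ alin pc.
have alpha0 : alpha 0 = 0.
  have E := alin 1 0 0; rewrite scaler0 addr0 GRing.mul1r in E.
  by apply: (addrI (alpha 0)); rewrite -E addr0.
case: HB => im htheta dtheta dec.
have [fD f0 fN fZ fh] := morph_lemmas im.
have [RD RZ Ri Rt RM] := Rep_lemmas theta im.
have im' := im; case: im' => _ fM f1 fp fd.
set m := (2 * n)%:Z.
have P0 : forall r, homog 0 r -> mul A omega r = 0 -> r = 0.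
  move=> r hr er; apply: (proj1 (pc 0)) => // y hy.
  have [c ->] := Homega_span y (homog_eq (subr0 _) hy).
  by rewrite cmulZr (gcommh hr Homega_deg) GRing.mul0r er !scaler0 alpha0.
have RU : forall b p1 q1 p2 q2, Rep iota theta b p1 q1 -> Rep iota theta b p2 q2 -> p1 = p2 /\ q1 = q2.
  move=> b p1 q1 p2 q2 e e'; have [xy [_ U]] := dec b.
  by have := U (p1, q1) e; have := U (p2, q2) e' => -> [-> ->].
have iota_inj : forall p p', iota p = iota p' -> p = p'.
  by move=> p' p'' e; have [] := RU _ _ _ _ _ (Ri p') (eq_ind_r (fun t => Rep iota theta t p'' 0) (Ri p'') e).
have Rex : forall b, exists p q, Rep iota theta b p q.
  by move=> b; have [[p1 q] [e _]] := dec b; exists p1, q.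
have Rdif : forall b p1 q, Rep iota theta b p1 q -> dif B b = iota (mul A omega q).
  move=> b p1 q ->; rewrite difD -fd trivial_dif f0 add0r (leib _ htheta) dtheta.
  by rewrite -fd trivial_dif f0 cmul0r scaler0 addr0 fM.
have sg1 : (-1 : K) ^ (p * ((2 * n)%:Z - 1)) = -1.
  by rewrite (_ : p * _ = 2 * (2 * i * n - i + n - 1) + 1) ?sgn_odd // /p; nia.
have Rl : forall b p' q, Rep iota theta b p' q ->
    Rep iota theta (mul B (iota a) b) (mul A a p') (- mul A a q).
  move=> b p' q ->; rewrite /Rep cmulDr fM mulA (gcommh (fh _ _ ha) htheta) sg1.
  by rewrite scaleN1r cmulNl -mulA fN fM cmulNr.
have [y [hy ay]] : exists y, homog ((2 * n)%:Z - p) y /\ alpha (mul A a y) != 0.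
  apply: NNPP => N; move/eqP: anz; apply; apply: (proj1 (pc p) a ha) => y hy.
  by apply/eqP; apply/negPn/negP => ne; apply: N; exists y; split.
set q := (2 * n)%:Z - p.
have pq : p + q = (2 * n)%:Z by rewrite /q addrC subrK.
have [c ec] := Homega_span (mul A a y) (homog_eq pq (homogM ha hy)).
have ac : alpha (mul A a y) = c.
  by rewrite ec -[c *: omega]addr0 alin Homega alpha0 mulr1 addr0.
have cnz : c != 0 by rewrite -ac.
set b := c^-1 *: y.
have hb : homog q b by apply: homogZ.
have ab : mul A a b = omega by rewrite cmulZr ec scalerA mulVf // scale1r.
have sgq : (-1 : K) ^ (q * p) = -1.
  by rewrite (_ : q * p = 2 * (2 * (n%:Z - i - 1) * i + n%:Z - 1) + 1) ?sgn_odd // /q /p; nia.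
have ba : mul A b a = - omega by rewrite (gcommh hb ha) sgq ab scaleN1r.
have ia0 : dif B (iota a) = 0 by rewrite -fd trivial_dif f0.
have ib0 : dif B (iota b) = 0 by rewrite -fd trivial_dif f0.
have ht1 : homog (p + q - 1) theta by apply: homog_eq htheta; rewrite /q; lia.
have ht2 : homog (q + p - 1) (- theta) by apply: homogN; apply: homog_eq htheta; rewrite /q; lia.
have e1 : mul B (iota a) (iota b) = dif B theta by rewrite -fM ab dtheta.
have e2 : mul B (iota b) (iota a) = dif B (- theta) by rewrite -fM ba fN difN dtheta.
have [u' [v' [w [_ _ e1' e2' ew]]]] :=
  MB p q p _ _ _ (fh _ _ ha) (fh _ _ hb) (fh _ _ ha) ia0 ib0 ia0 _ _ ht1 ht2 e1 e2.
have [p1 [q1 r1]] := Rex u'.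
have [p2 [q2 r2]] := Rex v'.
have [p3 [q3 r3]] := Rex w.
have wq1 : mul A omega q1 = omega by apply: iota_inj; rewrite -(Rdif _ _ _ r1) -e1' -fM ab.
have wq2 : mul A omega q2 = - omega by apply: iota_inj; rewrite -(Rdif _ _ _ r2) -e2' -fM ba.
set s := (-1 : K) ^ (p + 1).
have := RD _ _ _ _ _ _ (RM _ _ _ a r1) (RZ s _ _ _ (Rl _ _ _ r2)).
rewrite ew (Rdif _ _ _ r3) => R.
have [_ E] := RU _ _ _ _ _ R (Ri _).
have PR : forall r, proj A p (mul A r a) = mul A (proj A 0 r) a.
  by move=> r; have := @proj_mulR K charK0 A p 0 r a; rewrite add0r ha.
have PL : forall r, proj A p (mul A a r) = mul A a (proj A 0 r).
  by move=> r; have := @proj_mulL K charK0 A p 0 a r; rewrite add0r ha.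
have Pw : forall r, proj A (2 * n)%:Z (mul A omega r) = mul A omega (proj A 0 r).
  by move=> r; have := @proj_mulL K charK0 A (2 * n)%:Z 0 omega r; rewrite add0r Homega_deg.
have pq1 : proj A 0 q1 = one A.
  apply/eqP; rewrite -subr_eq0 -(@proj_one K A) -projB; apply/eqP; apply: P0.
    exact: homog_proj.
  by rewrite -Pw cmulBr wq1 mul1r subrr proj0.
have pq2 : proj A 0 q2 = - one A.
  apply/eqP; rewrite -addr_eq0 -(@proj_one K A) -projD; apply/eqP; apply: P0.
    exact: homog_proj.
  by rewrite -Pw cmulDr wq2 mul1r addNr proj0.
have := f_equal (proj A p) E.
rewrite proj0 projD projZ projN PR PL pq1 pq2 mul1l cmulNr mul1r opprK.
rewrite /s (_ : p + 1 = 2 * (i + 1)); last by rewrite /p; lia.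
rewrite sgn_even scale1r => /eqP; rewrite -mulr2n -scaler_nat scaler_eq0 => /orP [].
  by move/pcharf0P: charK0 => ->.
by rewrite (negbTE anz).
Qed.
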